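(* In the Gaussian sequential learning model with binary states and heterogeneous privacy budgets described in the context, where the budgets $\varepsilon_n$ are drawn independently from the uniform distribution $\mathrm{U}[0,1]$, asymptotic learning occurs almost surely under the smooth randomized response strategy.
   Context: Gaussian model: unknown state $\theta\in\{-1,+1\}$ with uniform prior; agents $n=1,2,\dots$ act in sequence; agent $n$ privately observes $s_n\sim\mathcal{N}(\theta,\sigma^2)$, i.i.d. given $\theta$, $\sigma>0$, and has a private budget $\varepsilon_n\sim\mathrm{U}[0,1]$, independent across agents and of everything else. The public log-likelihood ratio is $l_n=\log\frac{\mathbb{P}(\theta=+1\mid x_1,\dots,x_{n-1})}{\mathbb{P}(\theta=-1\mid x_1,\dots,x_{n-1})}$, $l_1=0$, where $x_i$ are reported actions. With $t(l)=-\sigma^2l/2$, agent $n$'s intended action is $a_n=+1$ if $s_n>t(l_n)$, else $-1$; under smooth randomized response she reports $x_n=a_n$ with probability $1-u_n$ and $x_n=-a_n$ with probability $u_n=\frac12e^{-\varepsilon_n|s_n-t(l_n)|}$. The public, not observing $\varepsilon_n$, updates $l_{n+1}=l_n+\log\frac{\mathbb{P}(x_n\mid l_n,\theta=+1)}{\mathbb{P}(x_n\mid l_n,\theta=-1)}$, where these probabilities average over both $s_n$ and $\varepsilon_n$. Asymptotic learning means agents' actions converge to the true state, i.e., $\lim_{n\to\infty}\mathbb{P}(a_n=\theta)=1$. *)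

(* Defs.v *)
From HB Require Import structures.
From mathcomp Require Import all_boot all_order all_algebra.
From mathcomp Require Import all_classical all_reals all_analysis.
Set Implicit Arguments. Unset Strict Implicit. Unset Printing Implicit Defensive.
Import Order.TTheory GRing.Theory Num.Theory.
Import numFieldNormedType.Exports.
Local Open Scope classical_set_scope.
Local Open Scope ring_scope.

Section Model.
Context {R : realType}.
Variable sigma : R.

(* states / actions in {-1,+1} are encoded as booleans: true = +1, false = -1 *)
Definition sgn (b : bool) : R := if b then 1 else -1.

Definition thr (l : R) : R := - (sigma ^+ 2 * l) / 2.

Definition intended (l s : R) : bool := thr l < s.

Definition flipprob (l s eps : R) : R := expR (- (eps * `|s - thr l|)) / 2.

Definition sig_pdf (theta : bool) (s : R) : R := normal_pdf (sgn theta) sigma s.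

(* P(x_n = x | l_n = l, theta), averaging over s ~ N(theta,sigma^2) and
   eps ~ U[0,1] (independent) *)
Definition report_prob (theta : bool) (l : R) (x : bool) : R :=
  \int[lebesgue_measure]_(s in [set: R])
    (sig_pdf theta s *
     \int[lebesgue_measure]_(e in `[0%R, 1%R])
        (if intended l s == x then 1 - flipprob l s e else flipprob l s e)).

Definition lupdate (l : R) (x : bool) : R :=
  l + ln (report_prob true l x / report_prob false l x).

Fixpoint lrun (l : R) (xs : seq bool) : R :=
  if xs is x :: xs' then lrun (lupdate l x) xs' else l.

Fixpoint hist_prob (theta : bool) (l : R) (xs : seq bool) : R :=
  if xs is x :: xs' then report_prob theta l x * hist_prob theta (lupdate l x) xs'
  else 1.

Definition correct_prob (theta : bool) (l : R) : R :=
  \int[lebesgue_measure]_(s in [set: R])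
    (sig_pdf theta s * (if intended l s == theta then 1 else 0)).

(* P(a_{k+1} = theta): theta uniform, averaged over all histories
   x_1..x_k of reported actions of the first k agents (l_1 = 0) *)
Definition prob_correct (k : nat) : R :=
  \sum_(theta : bool) (1 / 2) *
    \sum_(xs : k.-tuple bool)
       hist_prob theta 0 xs * correct_prob theta (lrun 0 xs).

End Model.

Definition asymptotic_learning {R : realType} (sigma : R) : Prop :=
  (prob_correct sigma : nat -> R) @ \oo --> (1 : R).

(* Main.v *)
Require Import Defs.
From HB Require Import structures.
From mathcomp Require Import all_boot all_order all_algebra.
From mathcomp Require Import all_classical all_reals all_analysis.
From mathcomp Require Import ring lra.
Set Implicit Arguments. Unset Strict Implicit. Unset Printing Implicit Defensive.
Import Order.TTheory GRing.Theory Num.Theory.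
Import numFieldNormedType.Exports.
Local Open Scope classical_set_scope.
Local Open Scope ring_scope.

Module P1.

Section S.
Context {R : realType}.
Notation mu := (@lebesgue_measure R).

Definition I01 : set R := `[0%R, 1%R].

Lemma mI01 : measurable I01. Proof. exact: measurable_itv. Qed.

Lemma muI01 : mu I01 = 1%E.
Proof. by rewrite /I01 lebesgue_measure_itv/= lte01 oppr0 adde0. Qed.

Definition uf (d e : R) : R := expR (- (e * d)) / 2.

Lemma uf_ge0 d e : 0 <= uf d e.
Proof. by rewrite /uf divr_ge0 // expR_ge0. Qed.

Lemma uf_le d e : 0 <= d -> 0 <= e -> uf d e <= 1/2.
Proof.
move=> d0 e0; rewrite /uf ler_pM2r // expR_le1 oppr_le0; exact: mulr_ge0.
Qed.

Lemma integrable_uf d : 0 <= d -> mu.-integrable I01 (EFin \o uf d).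
Proof.
move=> d0; apply: measurable_bounded_integrable.
- exact: mI01.
- by rewrite /= muI01 ltry.
 
- apply: measurable_realfun.nonincreasing_measurable; first exact: mI01.
  move=> x y xy; rewrite /uf ler_pM2r // ler_expR lerN2.
  by rewrite ler_wpM2r.
- exists 1; split => // x x1 y; rewrite /I01 /= in_itv /= => /andP[y0 _].
  rewrite ger0_norm ?uf_ge0 //; apply: le_trans (uf_le d0 y0) _; lra.
Qed.

Lemma int_I01 (f : R -> R) (M : R) : measurable_fun I01 f ->
  (forall e, I01 e -> `|f e| <= M) -> mu.-integrable I01 (EFin \o f).
Proof.
move=> mf fM; apply: measurable_bounded_integrable => //.
- exact: mI01.
- by rewrite /= muI01 ltry.
- exists M; split; first exact: num_real.
  by move=> x Mx y yI /=; apply: le_trans (fM _ yI) _; apply: ltW.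
Qed.

Lemma int_cstI01 (c : R) : mu.-integrable I01 (EFin \o (fun _ : R => c)).
Proof. by apply: (@int_I01 _ `|c|) => //; exact: measurable_cst. Qed.

Lemma Rint_cstI01 (c : R) : \int[mu]_(e in I01) c = c.
Proof.
rewrite Rintegral_cst; last exact: mI01.
have -> : fine (mu I01) = 1 by rewrite muI01.
by rewrite mulr1.
Qed.

Lemma I01P e : I01 e -> 0 <= e <= 1.
Proof. by rewrite /I01 /= in_itv. Qed.

Definition ubar (d : R) : R := \int[mu]_(e in I01) uf d e.

Lemma ubar_ge0 d : 0 <= ubar d.
Proof. by apply: Rintegral_ge0 => x _; exact: uf_ge0. Qed.

Lemma ubar_le d : 0 <= d -> ubar d <= 1/2.
Proof.
move=> d0; rewrite -[X in _ <= X]Rint_cstI01; apply: le_Rintegral.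
- exact: mI01.
- exact: integrable_uf.
- exact: int_cstI01.
- by move=> e /I01P /andP[e0 _]; exact: uf_le.
Qed.

Lemma ubar0 : ubar 0 = 1/2.
Proof.
rewrite /ubar -[RHS]Rint_cstI01; apply: eq_Rintegral => e _.
by rewrite /uf mulr0 oppr0 expR0.
Qed.

Lemma ubar_mono d1 d2 : 0 <= d1 -> d1 <= d2 -> ubar d2 <= ubar d1.
Proof.
move=> d10 d12; apply: le_Rintegral.
- exact: mI01.
- by apply: integrable_uf; apply: le_trans d12.
- exact: integrable_uf.
- move=> e /I01P /andP[e0 _]; rewrite /uf ler_pM2r // ler_expR lerN2.
  exact: ler_wpM2l.
Qed.

Lemma ubar1_ge : expR (-1) / 2 <= ubar 1.
Proof.
rewrite -[X in X <= _]Rint_cstI01; apply: le_Rintegral.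
- exact: mI01.
- exact: int_cstI01.
- exact: integrable_uf.
- move=> e /I01P /andP[e0 e1]; rewrite /uf ler_pM2r // ler_expR lerN2 mulr1 //.
Qed.

Lemma ubar1_gt0 : 0 < ubar 1.
Proof. by apply: lt_le_trans ubar1_ge; rewrite divr_gt0 // expR_gt0. Qed.

Lemma expN_le (e : R) : 0 <= e <= 1 -> expR (- e) <= 1 - e / 2.
Proof.
move=> /andP[e0 e1]; rewrite expRN.
have h1 : 1 + e <= expR e by exact: expR_ge1Dx.
have h2 : 0 < 1 + e by lra.
apply: (@le_trans _ _ (1 + e)^-1).
  by rewrite lef_pV2 // ?posrE ?expR_gt0.
rewrite -(@ler_pM2l _ (1 + e)) // mulfV ?gt_eqF //; nra.
Qed.

Lemma ubar1_le : ubar 1 <= 3/8.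
Proof.
have onem_int : mu.-integrable I01 (EFin \o (fun e : R => ((unstable.onem e) ^+ 1) / 4)).
  apply: (@int_I01 _ 1).
    apply: measurable_realfun.nonincreasing_measurable; first exact: mI01.
    by move=> x y xy; rewrite /unstable.onem !expr1 ler_pM2r // lerB.
  by move=> e /I01P /andP[e0 e1]; rewrite /unstable.onem expr1 ger0_norm; lra.
apply: (@le_trans _ _ (\int[mu]_(e in I01) (1/4 + ((unstable.onem e) ^+ 1) / 4))).
  apply: le_Rintegral.
  - exact: mI01.
  - exact: integrable_uf.
  - apply: (@int_I01 _ 1).
      apply: measurable_realfun.nonincreasing_measurable; first exact: mI01.
      by move=> x y xy; rewrite /unstable.onem !expr1 lerD2l ler_pM2r // lerB.
    by move=> e /I01P /andP[e0 e1]; rewrite /unstable.onem expr1 ger0_norm; lra.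
  - move=> e /I01P /andP[e0 e1]; rewrite /uf mulr1 /unstable.onem expr1.
    have := @expN_le e; rewrite e0 e1 /= => /(_ isT); lra.
rewrite RintegralD; [|exact: mI01|exact: int_cstI01|exact: onem_int].
rewrite Rint_cstI01 RintegralZr; [|exact: mI01|].
  by rewrite Rintegral_onemXn; lra.
apply: (@int_I01 _ 1).
  apply: measurable_realfun.nonincreasing_measurable; first exact: mI01.
  by move=> x y xy; rewrite /unstable.onem !expr1 lerB.
by move=> e /I01P /andP[e0 e1]; rewrite /unstable.onem expr1 ger0_norm; lra.
Qed.

End S.

End P1.
Import P1.

Module P2.

Section S2.
Context {R : realType} (sigma : R) (hs : 0 < sigma).
Notation mu := (@lebesgue_measure R).
Notation t := (thr sigma).

Definition hT (l s : R) : R :=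
  if intended sigma l s then 1 - ubar `|s - t l| else ubar `|s - t l|.

Definition hx (l s : R) (x : bool) : R := if x then hT l s else 1 - hT l s.

Lemma innerE l s x :
  \int[mu]_(e in `[0, 1]) (if intended sigma l s == x then 1 - flipprob sigma l s e
                           else flipprob sigma l s e) = hx l s x.
Proof.
have E1 : \int[mu]_(e in `[0, 1]) (1 - flipprob sigma l s e) = 1 - ubar `|s - t l|.
  rewrite RintegralB; [|exact: mI01|exact: int_cstI01|exact: integrable_uf].
  by rewrite Rint_cstI01.
have E2 : \int[mu]_(e in `[0, 1]) (flipprob sigma l s e) = ubar `|s - t l| by [].
rewrite /hx /hT; case: x; case: (intended sigma l s) => /=; rewrite ?E1 ?E2 //; lra.
Qed.


Lemma ubar_le1 (d : R) : 0 <= d -> ubar d <= 1 - ubar d.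
Proof. by move=> d0; have := ubar_le d0; lra. Qed.

Lemma hT_mono l : nondecreasing_fun (hT l).
Proof.
move=> s1 s2 s12; rewrite /hT /intended.
case: ltP => h1; case: ltP => h2.
- rewrite lerD2l lerN2 !gtr0_norm ?subr_gt0 //; apply: ubar_mono; lra.
- lra.
- have := ubar_le (normr_ge0 (s1 - t l)); have := ubar_le (normr_ge0 (s2 - t l)); lra.
- rewrite !ler0_norm ?subr_le0 //; apply: ubar_mono; lra.
Qed.


Lemma hT_ge0 l s : 0 <= hT l s.
Proof.
rewrite /hT; case: ifP => _; last exact: ubar_ge0.
have := ubar_le (normr_ge0 (s - t l)); lra.
Qed.

Lemma hT_le1 l s : hT l s <= 1.
Proof.
rewrite /hT; case: ifP => _; first by have := ubar_ge0 `|s - t l|; lra.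
have := ubar_le (normr_ge0 (s - t l)); lra.
Qed.

Lemma hx_ge l s x : ubar `|s - t l| <= hx l s x.
Proof.
have := ubar_le (normr_ge0 (s - t l)); have := ubar_ge0 `|s - t l|.
rewrite /hx /hT; case: x; case: ifP => _; lra.
Qed.

Lemma hx_ge0 l s x : 0 <= hx l s x.
Proof. exact: le_trans (ubar_ge0 _) (hx_ge _ _ _). Qed.

Lemma hx_le1 l s x : hx l s x <= 1.
Proof. have := hT_ge0 l s; have := hT_le1 l s; rewrite /hx; case: x; lra. Qed.

Lemma measurable_hT l : measurable_fun setT (hT l).
Proof. by apply: measurable_realfun.nondecreasing_measurable => //; exact: hT_mono. Qed.

Lemma measurable_hx l x : measurable_fun setT (fun s => hx l s x).
Proof.
rewrite /hx; case: x; first exact: measurable_hT.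
by apply: measurable_realfun.measurable_funB => //; exact: measurable_hT.
Qed.

Definition f (th : bool) (s : R) : R := sig_pdf sigma th s.

Lemma f_ge0 th s : 0 <= f th s.
Proof. exact: normal_pdf_ge0. Qed.

Lemma fE th s : f th s =
  normal_peak sigma * expR (- (s - sgn th) ^+ 2 / (sigma ^+ 2 *+ 2)).
Proof. by rewrite /f /sig_pdf normal_pdfE ?gt_eqF. Qed.

Lemma f_int th : mu.-integrable setT (EFin \o f th).
Proof. exact: integrable_normal_pdf. Qed.

Lemma f_total th : \int[mu]_s f th s = 1.
Proof. by rewrite /Rintegral /f /sig_pdf integral_normal_pdf. Qed.

Lemma fM_int th (g : R -> R) (M : R) : measurable_fun setT g ->
  (forall s, `|g s| <= M) -> mu.-integrable setT (EFin \o (fun s => f th s * g s)).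
Proof.
move=> mg gM.
have := @integrableMl _ _ _ mu setT measurableT _ g (f_int th) mg.
have bd : [bounded g x | x in setT].
  exists M; split; first exact: num_real.
  by move=> x Mx y _; apply: le_trans (gM y) _; apply: ltW.
move=> /(_ bd); apply: eq_integrable => // s _ /=; by rewrite EFinM.
Qed.

Lemma fhx_int th l x : mu.-integrable setT (EFin \o (fun s => f th s * hx l s x)).
Proof.
apply: (@fM_int _ _ 1); first exact: measurable_hx.
by move=> s; rewrite ger0_norm ?hx_ge0 ?hx_le1.
Qed.

Lemma rE th l x : report_prob sigma th l x = \int[mu]_s (f th s * hx l s x).
Proof. by apply: eq_Rintegral => s _; rewrite innerE. Qed.

Lemma r_sum th l : report_prob sigma th l true + report_prob sigma th l false = 1.
Proof.
rewrite !rE -RintegralD //; [|exact: fhx_int|exact: fhx_int].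
rewrite -(f_total th); apply: eq_Rintegral => s _ /=; rewrite /hx; ring.
Qed.


Lemma Rint_indic (a b : R) : a <= b -> \int[mu]_s (\1_(`[a, b]%classic : set R) s) = b - a.
Proof.
move=> ab; rewrite /Rintegral integral_indic//= setIT lebesgue_measure_itv /= lte_fin.
case: (ltP a b) => [_|ba] //=.
have -> : b = a by apply/eqP; rewrite eq_le ab ba.
by rewrite subrr.
Qed.

Lemma Rint_lb (g : R -> R) (a b c : R) : a <= b ->
  mu.-integrable setT (EFin \o g) ->
  (forall s, c * \1_(`[a, b]%classic : set R) s <= g s) -> c * (b - a) <= \int[mu]_s g s.
Proof.
move=> ab gi hg.
have ii : mu.-integrable setT (EFin \o (fun s => c * \1_(`[a, b]%classic : set R) s)).
  have := integrableZl measurableT c (integrable_indic_itv a b true false).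
  by apply: eq_integrable => // s _ /=; rewrite EFinM.
have E : \int[mu]_s (c * \1_(`[a, b]%classic : set R) s) = c * (b - a).
  rewrite RintegralZl //; first by rewrite Rint_indic.
  exact: integrable_indic_itv.
by rewrite -E; apply: le_Rintegral.
Qed.

Lemma f_lb th (s T : R) : `|s| <= T -> 
  normal_peak sigma * expR (- (T + 1) ^+ 2 / (sigma ^+ 2 *+ 2)) <= f th s.
Proof.
move=> sT; rewrite fE ler_pM2l; last by rewrite normal_peak_gt0 // gt_eqF.
rewrite ler_expR !mulNr lerN2 ler_pM2r; last first.
  by rewrite invr_gt0 pmulrn_rgt0 // exprn_gt0.
have [h1 h2] : -T <= s /\ s <= T by move: sT; rewrite ler_norml => /andP[].
by case: th; rewrite /sgn; nra.
Qed.

Lemma r_lb th l x :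
  normal_peak sigma * expR (- (`|t l| + 1 + 1) ^+ 2 / (sigma ^+ 2 *+ 2)) * ubar 1 * 2
  <= report_prob sigma th l x.
Proof.
rewrite rE.
have -> : (2 : R) = (t l + 1) - (t l - 1) by ring.
apply: Rint_lb; [lra | exact: fhx_int |] => s.
rewrite indicE; case: (boolP (s \in _)) => hin /=; last first.
  by rewrite mulr0 mulr_ge0 ?f_ge0 ?hx_ge0.
rewrite mulr1.
move: hin; rewrite inE /= in_itv /= => /andP[h1 h2].
apply: ler_pM.
- by rewrite mulr_ge0 ?normal_peak_ge0 ?expR_ge0.
- exact: ubar_ge0.
- apply: f_lb; rewrite ler_norml.
  have a1 := ler_norm (t l); have a2 := ler_norm (- t l); rewrite normrN in a2.
  apply/andP; split; lra.
- apply: le_trans (hx_ge _ _ _); apply: ubar_mono => //.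
  by rewrite ler_norml; apply/andP; split; lra.
Qed.

Lemma r_pos th l x : 0 < report_prob sigma th l x.
Proof.
apply: lt_le_trans (r_lb _ _ _).
rewrite !mulr_gt0 ?expR_gt0 ?ubar1_gt0 //; by apply: normal_peak_gt0; rewrite gt_eqF.
Qed.

End S2.

End P2.
Import P2.

Module P3.

Section S3.
Context {R : realType} (sigma : R) (hs : 0 < sigma).
Notation mu := (@lebesgue_measure R).
Notation t := (thr sigma).
Notation f := (f sigma).
Notation hT := (hT sigma).
Notation kk := (sigma ^+ 2 *+ 2).

Lemma kk_gt0 : 0 < kk.
Proof. by rewrite pmulrn_rgt0 // exprn_gt0. Qed.

Lemma fT s : f true s = normal_peak sigma * expR (- (s - 1) ^+ 2 / kk).
Proof. by rewrite fE. Qed.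

Lemma fF s : f false s = normal_peak sigma * expR (- (s + 1) ^+ 2 / kk).
Proof. by rewrite fE //= /sgn opprK. Qed.

Lemma peak_gt0 : 0 < normal_peak sigma.
Proof. by apply: normal_peak_gt0; rewrite gt_eqF. Qed.

Definition dlt (B : R) : R :=
  normal_peak sigma * expR (- (B - 1) ^+ 2 / kk) * (1 - expR (- 4 / kk)).

Lemma dlt_gt0 B : 0 < dlt B.
Proof.
rewrite /dlt !mulr_gt0 ?peak_gt0 ?expR_gt0 // subr_gt0 expR_lt1.
by rewrite mulNr oppr_lt0 divr_gt0 ?kk_gt0.
Qed.

Lemma fdiff_aux (s B : R) : 1 <= s <= B ->
  expR (- (B - 1) ^+ 2 / kk) * (1 - expR (- 4 / kk)) <=
  expR (- (s - 1) ^+ 2 / kk) - expR (- (s + 1) ^+ 2 / kk).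
Proof.
move=> /andP[s1 sB].
have k0 := kk_gt0.
have e1 : expR (- (s + 1) ^+ 2 / kk) <= expR (- (s - 1) ^+ 2 / kk) * expR (- 4 / kk).
  rewrite -expRD ler_expR -mulrDl ler_pM2r ?invr_gt0 //; nra.
have e2 : expR (- (B - 1) ^+ 2 / kk) <= expR (- (s - 1) ^+ 2 / kk).
  rewrite ler_expR ler_pM2r ?invr_gt0 //; nra.
have e3 : 0 <= 1 - expR (- 4 / kk).
  by rewrite subr_ge0 expR_le1 mulNr oppr_le0 divr_ge0 // ltW.
have e4 := expR_ge0 (- (s - 1) ^+ 2 / kk).
nra.
Qed.

Lemma fdiff_pos (s B : R) : 1 <= s <= B -> dlt B <= f true s - f false s.
Proof.
move=> h; rewrite fT fF -mulrBr /dlt -mulrA ler_pM2l ?peak_gt0 //.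
exact: fdiff_aux.
Qed.

Lemma fdiff_neg (s B : R) : -B <= s <= -1 -> dlt B <= f false s - f true s.
Proof.
move=> /andP[h1 h2]; rewrite fT fF -mulrBr /dlt -mulrA ler_pM2l ?peak_gt0 //.
have -> : (s + 1) ^+ 2 = (- s - 1) ^+ 2 by ring.
have -> : (s - 1) ^+ 2 = (- s + 1) ^+ 2 by ring.
apply: fdiff_aux; apply/andP; split; lra.
Qed.

Lemma fdiff_sgn (s : R) : 0 <= s -> f false s <= f true s.
Proof.
move=> s0; rewrite fT fF ler_pM2l ?peak_gt0 // ler_expR ler_pM2r ?invr_gt0 ?kk_gt0 //.
nra.
Qed.

Lemma fdiff_sgn' (s : R) : s <= 0 -> f true s <= f false s.
Proof.
move=> s0; rewrite fT fF ler_pM2l ?peak_gt0 // ler_expR ler_pM2r ?invr_gt0 ?kk_gt0 //.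
nra.
Qed.


Lemma hT_at_t l : hT l (t l) = 1/2.
Proof. by rewrite /P2.hT /intended ltxx subrr normr0 ubar0. Qed.

Lemma hT_at_tp1 l : hT l (t l + 1) = 1 - ubar 1.
Proof.
rewrite /P2.hT /intended ltrDl ltr01 (_ : t l + 1 - t l = 1) ?normr1 //; ring.
Qed.

Lemma hT_at_tm1 l : hT l (t l - 1) = ubar 1.
Proof.
rewrite /P2.hT /intended ltNge lerBlDr lerDl ler01 /=.
by rewrite (_ : t l - 1 - t l = - 1) ?normrN ?normr1 //; ring.
Qed.

Lemma intB (F G : R -> R) : mu.-integrable setT (EFin \o F) ->
  mu.-integrable setT (EFin \o G) -> mu.-integrable setT (EFin \o (fun s => F s - G s)).
Proof.
move=> iF iG; have := integrableB measurableT iF iG.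
by apply: eq_integrable => // s _ /=; rewrite EFinB.
Qed.

Lemma intD (F G : R -> R) : mu.-integrable setT (EFin \o F) ->
  mu.-integrable setT (EFin \o G) -> mu.-integrable setT (EFin \o (fun s => F s + G s)).
Proof.
move=> iF iG; have := integrableD measurableT iF iG.
by apply: eq_integrable => // s _ /=; rewrite EFinD.
Qed.

Lemma intZ (F : R -> R) (c : R) : mu.-integrable setT (EFin \o F) ->
  mu.-integrable setT (EFin \o (fun s => c * F s)).
Proof.
move=> iF; have := integrableZl measurableT c iF.
by apply: eq_integrable => // s _ /=; rewrite EFinM.
Qed.

Lemma Rint_lb1 (g : R -> R) (a c : R) :
  mu.-integrable setT (EFin \o g) ->
  (forall s, c * \1_(`[a, a + 1]%classic : set R) s <= g s) -> c <= \int[mu]_s g s.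
Proof.
move=> gi hg; have := @Rint_lb _ g a (a + 1) c; rewrite (_ : a + 1 - a = 1) ?mulr1; last by ring.
by apply => //; lra.
Qed.

Lemma abs_t l M : `|l| <= M -> `|t l| <= sigma ^+ 2 * M / 2.
Proof.
move=> lM; rewrite /thr normrM normrN normfV normrM ger0_norm ?sqr_ge0 //.
rewrite (ger0_norm (ler0n _ 2)) ler_pM2r // ler_pM2l // exprn_gt0 //.
Qed.

Lemma informative l M : `|l| <= M ->
  dlt (sigma ^+ 2 * M / 2 + 2) / 8 <=
  report_prob sigma true l true - report_prob sigma false l true.
Proof.
move=> lM.
set B := sigma ^+ 2 * M / 2 + 2.
have tB := abs_t lM.
have a1 := ler_norm (t l); have a2 := ler_norm (- t l); rewrite normrN in a2.
set h0 := hT l 0.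
pose g s := (f true s - f false s) * (hT l s - h0).
have hint : forall th, mu.-integrable setT (EFin \o (fun s => f th s * hT l s)).
  by move=> th; exact: (fhx_int sigma th l true).
have cint : forall th, mu.-integrable setT (EFin \o (fun s => f th s * h0)).
  move=> th; apply: (@fM_int _ sigma th _ `|h0|); first exact: measurable_cst.
  by move=> s.
have E : report_prob sigma true l true - report_prob sigma false l true =
         \int[mu]_s g s.
  rewrite !rE /P2.hx.
  have -> : \int[mu]_s g s = \int[mu]_s ((f true s * hT l s - f false s * hT l s) -
                             (f true s * h0 - f false s * h0)).
    by apply: eq_Rintegral => s _; rewrite /g; ring.
  rewrite RintegralB //; last first.
  - by apply: intB; [exact: cint|exact: cint].
  - by apply: intB; [exact: hint|exact: hint].
  rewrite RintegralB; [|exact: measurableT|exact: hint|exact: hint].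
  rewrite RintegralB; [|exact: measurableT|exact: cint|exact: cint].
  rewrite !RintegralZr //; try exact: f_int.
  by rewrite !f_total; ring.
rewrite E.
have gint : mu.-integrable setT (EFin \o g).
  have := intB (intB (hint true) (hint false)) (intB (cint true) (cint false)).
  by apply: eq_integrable => // s _ /=; rewrite /g; congr EFin; ring.
have g0 : forall s, 0 <= g s.
  move=> s; rewrite /g; case: (lerP 0 s) => s0.
  - apply: mulr_ge0; first by rewrite subr_ge0; exact: fdiff_sgn.
    by rewrite subr_ge0; apply: hT_mono.
  - apply: mulr_le0; first by rewrite subr_le0; apply: fdiff_sgn'; exact: ltW.
    by rewrite subr_le0; apply: hT_mono; exact: ltW.
have dpos := dlt_gt0 B.
have u1 := ubar1_le (R:=R).
case: (lerP 0 (t l)) => ht.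
- apply: (@Rint_lb1 g (t l + 1) (dlt B / 8) gint) => s.
  rewrite indicE; case: (boolP (s \in _)) => hin /=; last by rewrite mulr0.
  move: hin; rewrite inE /= in_itv /= => /andP[h1 h2]; rewrite mulr1.
  have d1 : dlt B <= f true s - f false s by apply: fdiff_pos; rewrite /B; apply/andP; split; lra.
  have d2 : 1 - ubar 1 <= hT l s by rewrite -(hT_at_tp1 l); apply: hT_mono.
  have d3 : h0 <= 1/2 by rewrite -(hT_at_t l); apply: hT_mono.
  rewrite /g; nra.
- apply: (@Rint_lb1 g (t l - 2) (dlt B / 8) gint) => s.
  rewrite indicE; case: (boolP (s \in _)) => hin /=; last by rewrite mulr0.
  move: hin; rewrite inE /= in_itv /= => /andP[h1 h2]; rewrite mulr1.
  have d1 : dlt B <= f false s - f true s by apply: fdiff_neg; rewrite /B; apply/andP; split; lra.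
  have d2 : hT l s <= ubar 1 by rewrite -(hT_at_tm1 l); apply: hT_mono; lra.
  have d3 : 1/2 <= h0 by rewrite -(hT_at_t l); apply: hT_mono; exact: ltW.
  rewrite /g; nra.
Qed.


Lemma map_left l s : s <= t l -> expR l * f true s <= f false s.
Proof.
move=> st; rewrite fT fF mulrCA ler_pM2l ?peak_gt0 // -expRD ler_expR.
have k0 := kk_gt0.
rewrite -subr_ge0 (_ : _ - _ = ((s - 1) ^+ 2 - (s + 1) ^+ 2 - l * kk) / kk); last first.
  by field; rewrite gt_eqF.
apply: divr_ge0; last exact: ltW.
rewrite /thr in st; rewrite mulr2n; nra.
Qed.

Lemma map_right l s : t l < s -> expR (- l) * f false s <= f true s.
Proof.
move=> st; rewrite fT fF mulrCA ler_pM2l ?peak_gt0 // -expRD ler_expR.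
have k0 := kk_gt0.
rewrite -subr_ge0 (_ : _ - _ = ((s + 1) ^+ 2 - (s - 1) ^+ 2 + l * kk) / kk); last first.
  by field; rewrite gt_eqF.
apply: divr_ge0; last exact: ltW.
rewrite /thr in st; rewrite mulr2n; nra.
Qed.

Lemma amgm (x y E : R) : 0 <= x -> 0 <= y -> 0 < E -> E ^+ 2 * x <= y ->
  E * x <= (x + y) / 2.
Proof. move=> x0 y0 E0 h; have := mulr_ge0 x0 (sqr_ge0 (1 - E)); nra. Qed.

Definition ind (th : bool) (l s : R) : R := if intended sigma l s == th then 1 else 0.

Lemma measurable_ind th l : measurable_fun setT (ind th l).
Proof.
case: th.
- apply: measurable_realfun.nondecreasing_measurable => // x y xy.
  rewrite /ind /intended; case: (ltP (t l) x) => h1; case: (ltP (t l) y) => h2 //=; lra.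
- apply: measurable_realfun.nonincreasing_measurable => // x y xy.
  rewrite /ind /intended; case: (ltP (t l) x) => h1; case: (ltP (t l) y) => h2 //=; lra.
Qed.

Lemma ind01 th l s : 0 <= ind th l s <= 1.
Proof. by rewrite /ind; case: ifP => _; rewrite ?lexx ?ler01. Qed.

Lemma find_int th l : mu.-integrable setT (EFin \o (fun s => f th s * ind th l s)).
Proof.
apply: (@fM_int _ sigma th _ 1); first exact: measurable_ind.
by move=> s; have /andP[h1 h2] := ind01 th l s; rewrite ger0_norm.
Qed.

Lemma fnind_int th l : mu.-integrable setT (EFin \o (fun s => f th s * (1 - ind th l s))).
Proof.
apply: (@fM_int _ sigma th _ 1).
  by apply: measurable_realfun.measurable_funB => //; exact: measurable_ind.
by move=> s; have /andP[h1 h2] := ind01 th l s; rewrite ger0_norm; lra.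
Qed.

Lemma errE th l : 1 - correct_prob sigma th l = \int[mu]_s (f th s * (1 - ind th l s)).
Proof.
have -> : \int[mu]_s (f th s * (1 - ind th l s)) = \int[mu]_s (f th s - f th s * ind th l s).
  by apply: eq_Rintegral => s _; ring.
rewrite RintegralB; [|exact: measurableT|exact: f_int|exact: find_int].
by rewrite f_total.
Qed.

Lemma err_ge0 th l : 0 <= 1 - correct_prob sigma th l.
Proof.
rewrite errE; apply: Rintegral_ge0 => s _; apply: mulr_ge0; first exact: f_ge0.
by have /andP[] := ind01 th l s; lra.
Qed.

Lemma err_bound l :
  expR (l / 2) * (1 - correct_prob sigma true l) +
  expR (- (l / 2)) * (1 - correct_prob sigma false l) <= 1.
Proof.
rewrite !errE -!RintegralZl; [|exact: measurableT|exact: fnind_int|exact: measurableT|exact: fnind_int].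
rewrite -RintegralD; [|exact: measurableT|apply: intZ; exact: fnind_int|apply: intZ; exact: fnind_int].
have H1 : \int[mu]_s ((f true s + f false s) / 2) = 1.
  have -> : \int[mu]_s ((f true s + f false s) / 2) = \int[mu]_s (2^-1 * (f true s + f false s)).
    by apply: eq_Rintegral => s _; rewrite mulrC.
  rewrite RintegralZl; [|exact: measurableT|apply: intD; exact: f_int].
  rewrite RintegralD; [|exact: measurableT|exact: f_int|exact: f_int].
  by rewrite !f_total; lra.
rewrite -[X in _ <= X]H1.
apply: le_Rintegral.
- exact: measurableT.
- by apply: intD; apply: intZ; exact: fnind_int.
- have := intZ (2^-1) (intD (f_int sigma true) (f_int sigma false)).
  by apply: eq_integrable => // s _ /=; rewrite mulrC.
move=> s _; have hp := f_ge0 sigma true s; have hm := f_ge0 sigma false s.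
have E0 := expR_gt0 (l / 2).
have E2 : expR (l / 2) ^+ 2 = expR l by rewrite -expRM_natr; congr expR; field.
have E2' : expR (- (l / 2)) ^+ 2 = expR (- l) by rewrite -expRM_natr; congr expR; field.
rewrite /ind; case: (boolP (intended sigma l s)) => hi /=.
  rewrite subrr subr0 mulr0 mulr1 mulr0 add0r.
  rewrite addrC; apply: amgm => //; first exact: expR_gt0.
  rewrite E2'; apply: map_right; exact: hi.
- rewrite subrr subr0 mulr0 mulr1 mulr0 addr0.
  apply: amgm => //; rewrite E2; apply: map_left; rewrite /intended -leNgt in hi; exact: hi.
Qed.

End S3.

End P3.
Import P3.

Module P4.

Section S4.
Context {R : realType}.

Fixpoint SL (k : nat) (F : seq bool -> R) : R :=
  if k is k'.+1 then SL k' (fun xs => F (true :: xs)) + SL k' (fun xs => F (false :: xs))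
  else F [::].

Lemma tuple_sum k (F : seq bool -> R) : \sum_(xs : k.-tuple bool) F xs = SL k F.
Proof.
elim: k F => [|k IH] F.
  rewrite (big_pred1 [tuple]) //= => t; by rewrite [t]tuple0 /= eqxx.
have bij : bijective (fun p : bool * k.-tuple bool => [tuple of p.1 :: p.2]).
  exists (fun t : k.+1.-tuple bool => (thead t, [tuple of behead t])).
    by case=> b t /=; congr pair; apply: val_inj.
  by move=> t; apply: val_inj => /=; case: t => -[|b s] //= _.
rewrite (reindex _ (onW_bij _ bij)) /= -(pair_bigA _ (fun b (t : k.-tuple bool) => F (b :: t))) big_bool /=.
by rewrite (IH (fun xs => F (true :: xs))) (IH (fun xs => F (false :: xs))).
Qed.

Lemma SL_rcons k F : SL k.+1 F = SL k (fun xs => F (rcons xs true) + F (rcons xs false)).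
Proof.
elim: k F => [|k IH] F //.
change (SL k.+1 (fun xs => F (true :: xs)) + SL k.+1 (fun xs => F (false :: xs)) = SL k.+1 (fun xs => F (rcons xs true) + F (rcons xs false))).
rewrite (IH (fun xs => F (true :: xs))) (IH (fun xs => F (false :: xs))).
reflexivity.
Qed.

Lemma SL_ext k F G : (forall xs, F xs = G xs) -> SL k F = SL k G.
Proof.
elim: k F G => [|k IH] F G FG /=; first exact: FG.
by congr (_ + _); apply: IH => xs; exact: FG.
Qed.

Lemma SL_le k F G : (forall xs, F xs <= G xs) -> SL k F <= SL k G.
Proof.
elim: k F G => [|k IH] F G FG /=; first exact: FG.
by apply: lerD; apply: IH.
Qed.

Lemma SL_lin k a b F G :
  SL k (fun xs => a * F xs + b * G xs) = a * SL k F + b * SL k G.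
Proof.
elim: k F G => [|k IH] F G //=.
rewrite (IH (fun xs => F (true :: xs))) (IH (fun xs => F (false :: xs))); ring.
Qed.


Lemma SL_D k F G : SL k (fun xs => F xs + G xs) = SL k F + SL k G.
Proof.
elim: k F G => [|k IH] F G //=.
rewrite (IH (fun xs => F (true :: xs))) (IH (fun xs => F (false :: xs))); ring.
Qed.

Lemma SL_Z k a F : SL k (fun xs => a * F xs) = a * SL k F.
Proof.
elim: k F => [|k IH] F //=.
rewrite (IH (fun xs => F (true :: xs))) (IH (fun xs => F (false :: xs))); ring.
Qed.

End S4.

Section S5.
Context {R : realType} (sigma : R) (hs : 0 < sigma).
Notation r := (report_prob sigma).
Notation H := (hist_prob sigma).
Notation lrun := (lrun sigma).

Lemma H_pos th l xs : 0 < H th l xs.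
Proof.
elim: xs l => [|x xs IH] l /=; first exact: ltr01.
by rewrite mulr_gt0 // r_pos.
Qed.

Lemma lrunE l xs : lrun l xs = l + ln (H true l xs / H false l xs).
Proof.
elim: xs l => [|x xs IH] l /=; first by rewrite divr1 ln1 addr0.
rewrite IH /lupdate -addrA; congr (_ + _).
have p1 := r_pos hs true l x; have p2 := r_pos hs false l x.
have p3 := H_pos true (lupdate sigma l x) xs; have p4 := H_pos false (lupdate sigma l x) xs.
rewrite -lnM ?posrE ?divr_gt0 //; congr ln; field.
by rewrite !gt_eqF.
Qed.

Lemma H_rcons th l xs x : H th l (rcons xs x) = H th l xs * r th (lrun l xs) x.
Proof.
elim: xs l => [|y xs IH] l /=; first by rewrite mul1r mulr1.
by rewrite IH mulrA.
Qed.

Lemma H_sum th l k : SL k (H th l) = 1.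
Proof.
elim: k => [|k IH] //.
rewrite SL_rcons -[RHS]IH; apply: SL_ext => xs.
by rewrite !H_rcons -mulrDr r_sum mulr1.
Qed.

End S5.

Section S6.
Context {R : realType}.

Lemma hell (p q : R) : 0 <= p <= 1 -> 0 <= q <= 1 ->
  Num.sqrt (p * q) + Num.sqrt ((1 - p) * (1 - q)) <= 1 - (p - q) ^+ 2 / 8.
Proof.
move=> /andP[p0 p1] /andP[q0 q1].
rewrite !sqrtrM //; try lra.
set a := Num.sqrt p; set b := Num.sqrt q.
set c := Num.sqrt (1 - p); set d := Num.sqrt (1 - q).
have ha : a ^+ 2 = p by rewrite sqr_sqrtr.
have hb : b ^+ 2 = q by rewrite sqr_sqrtr.
have hc : c ^+ 2 = 1 - p by rewrite sqr_sqrtr // subr_ge0.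
have hd : d ^+ 2 = 1 - q by rewrite sqr_sqrtr // subr_ge0.
have a0 : 0 <= a by exact: sqrtr_ge0.
have b0 : 0 <= b by exact: sqrtr_ge0.
have a1 : a <= 1 by rewrite -sqrtr1 ler_sqrt.
have b1 : b <= 1 by rewrite -sqrtr1 ler_sqrt.
have e1 : (a + b) ^+ 2 <= 4 by nra.
have e2 : (p - q) ^+ 2 = (a - b) ^+ 2 * (a + b) ^+ 2 by rewrite -ha -hb; ring.
have e3 : (a - b) ^+ 2 * (a + b) ^+ 2 <= (a - b) ^+ 2 * 4.
  by apply: ler_wpM2l => //; exact: sqr_ge0.
have e4 : 0 <= (c - d) ^+ 2 by exact: sqr_ge0.
rewrite e2; nra.
Qed.

Lemma sqrt_le (X Y : R) : 0 <= Y -> X <= Y ^+ 2 -> Num.sqrt X <= Y.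
Proof.
move=> Y0 XY; apply: le_trans (_ : Num.sqrt (Y ^+ 2) <= Y).
  by rewrite ler_sqrt // sqr_ge0.
by rewrite sqrtr_sqr ger0_norm.
Qed.

Lemma sq_inj (a b : R) : 0 <= a -> 0 <= b -> a ^+ 2 = b ^+ 2 -> a = b.
Proof. by move=> a0 b0 h; apply/le_anti/andP; split; nra. Qed.

End S6.

Section S7.
Context {R : realType} (sigma : R) (hs : 0 < sigma).
Notation r := (report_prob sigma).
Notation H := (hist_prob sigma).
Notation lrun := (lrun sigma).

Definition w (xs : seq bool) : R := Num.sqrt (H true 0 xs * H false 0 xs).
Definition rho (l : R) : R :=
  Num.sqrt (r true l true * r false l true) + Num.sqrt (r true l false * r false l false).
Definition B (k : nat) : R := SL k w.

Lemma w_ge0 xs : 0 <= w xs. Proof. exact: sqrtr_ge0. Qed.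

Lemma w_rcons xs x : w (rcons xs x) =
  w xs * Num.sqrt (r true (lrun 0 xs) x * r false (lrun 0 xs) x).
Proof.
rewrite /w !H_rcons -sqrtrM; last by rewrite mulr_ge0 // ltW // H_pos.
by congr Num.sqrt; ring.
Qed.

Lemma B_succ k : B k.+1 = SL k (fun xs => w xs * rho (lrun 0 xs)).
Proof. by rewrite /B SL_rcons; apply: SL_ext => xs; rewrite !w_rcons /rho mulrDr. Qed.

Lemma r_false th l : r th l false = 1 - r th l true.
Proof. by have := r_sum sigma th l; lra. Qed.

Lemma r01 th l : 0 <= r th l true <= 1.
Proof.
have := r_pos hs th l true; have := r_pos hs th l false; rewrite r_false => h1 h2.
by apply/andP; split; lra.
Qed.

Lemma rho_ge0 l : 0 <= rho l.
Proof. by rewrite /rho addr_ge0 // sqrtr_ge0. Qed.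

Lemma rho_hell l : rho l <= 1 - (r true l true - r false l true) ^+ 2 / 8.
Proof. by rewrite /rho !r_false; apply: hell; apply: r01. Qed.

Lemma rho_le1 l : rho l <= 1.
Proof.
apply: le_trans (rho_hell l) _.
have := sqr_ge0 (r true l true - r false l true); lra.
Qed.

Definition eta (M : R) : R := (dlt sigma (sigma ^+ 2 * M / 2 + 2) / 8) ^+ 2 / 8.

Lemma eta_ge0 M : 0 <= eta M.
Proof. by rewrite /eta divr_ge0 // sqr_ge0. Qed.

Lemma rho_gap l M : `|l| <= M -> rho l <= 1 - eta M.
Proof.
move=> lM; apply: le_trans (rho_hell l) _.
have h := informative hs lM.
have d0 : 0 < dlt sigma (sigma ^+ 2 * M / 2 + 2) / 8 by rewrite divr_gt0 // dlt_gt0.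
rewrite /eta; set D := dlt _ _ / 8 in h d0 *.
have : D ^+ 2 <= (r true l true - r false l true) ^+ 2 by nra.
lra.
Qed.

Lemma eta_le1 M : 0 <= M -> eta M <= 1.
Proof.
move=> M0; have := rho_gap (l := 0) (M := M); rewrite normr0 => /(_ M0).
have := rho_ge0 0; lra.
Qed.

Lemma expR_half (l : R) : expR (l / 2) ^+ 2 = expR l.
Proof. by rewrite -expRM_natr; congr expR; field. Qed.

Lemma w_cut xs (M : R) : M < `|lrun 0 xs| ->
  w xs <= expR (- (M / 2)) * (H true 0 xs + H false 0 xs).
Proof.
have P0 := @H_pos _ sigma hs true 0 xs; have Q0 := @H_pos _ sigma hs false 0 xs.
set P := H true 0 xs in P0 *; set Q := H false 0 xs in Q0 *.
have eE : expR (lrun 0 xs) = P / Q.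
  by rewrite (lrunE hs) add0r lnK // posrE divr_gt0.
have e0 := expR_gt0 (- (M / 2)).
have e2 : expR (- (M / 2)) ^+ 2 = expR (- M) by rewrite -expRM_natr; congr expR; field.
have eM : expR (- M) * expR M = 1 by rewrite -expRD addNr expR0.
have eMp := expR_gt0 M; have eMn := expR_gt0 (- M).
rewrite ltr_normr => /orP[h|h].
- have h1 : expR M < P / Q by rewrite -eE ltr_expR.
  have h2 : expR M * Q < P by rewrite -ltr_pdivlMr.
  apply: le_trans (_ : expR (- (M / 2)) * P <= _); last by rewrite ler_pM2l // lerDl ltW.
  apply: sqrt_le; first by rewrite mulr_ge0 // ltW.
  have h3 : Q <= expR (- M) * P by nra.
  change (P * Q <= (expR (- (M / 2)) * P) ^+ 2); rewrite exprMn e2; nra.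
- have h1 : P / Q < expR (- M) by rewrite -eE ltr_expR ltrNr.
  have h2 : P < expR (- M) * Q by rewrite -ltr_pdivrMr.
  apply: le_trans (_ : expR (- (M / 2)) * Q <= _); last by rewrite ler_pM2l // lerDr ltW.
  apply: sqrt_le; first by rewrite mulr_ge0 // ltW.
  have h3 : P <= expR (- M) * Q by nra.
  change (P * Q <= (expR (- (M / 2)) * Q) ^+ 2); rewrite exprMn e2; nra.
Qed.

End S7.

End P4.
Import P4.

Module P5.

Section S8.
Context {R : realType} (sigma : R) (hs : 0 < sigma).
Notation r := (report_prob sigma).
Notation H := (hist_prob sigma).
Notation lrun := (lrun sigma).
Notation w := (w sigma).
Notation B := (B sigma).
Notation rho := (rho sigma).
Notation eta := (eta sigma).

Lemma B_step k (M : R) : 0 <= M ->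
  B k.+1 <= (1 - eta M) * B k + eta M * expR (- (M / 2)) * 2.
Proof.
move=> M0; rewrite B_succ //.
have e0 := expR_gt0 (- (M / 2)); have et0 := eta_ge0 sigma M.
apply: (@le_trans _ _ (SL k (fun xs => (1 - eta M) * w xs +
    (eta M * expR (- (M / 2))) * (H true 0 xs + H false 0 xs)))).
  apply: SL_le => xs.
  have w0 := w_ge0 sigma xs.
  have P0 := @H_pos _ sigma hs true 0 xs; have Q0 := @H_pos _ sigma hs false 0 xs.
  case: (lerP `|lrun 0 xs| M) => hl.
  - have g1 := rho_gap hs hl.
    have c1 : 0 <= w xs * (1 - eta M - rho (lrun 0 xs)) by apply: mulr_ge0; lra.
    have c2 : 0 <= eta M * expR (- (M / 2)) * (H true 0 xs + H false 0 xs).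
      by apply: mulr_ge0; [apply: mulr_ge0|]; lra.
    nra.
  - have g1 := w_cut hs hl; have g2 := rho_le1 hs (lrun 0 xs).
    have c1 : 0 <= w xs * (1 - rho (lrun 0 xs)) by apply: mulr_ge0; lra.
    have c2 : eta M * w xs <= eta M * (expR (- (M / 2)) * (H true 0 xs + H false 0 xs)).
      exact: ler_wpM2l.
    nra.
rewrite SL_D !SL_Z SL_D !(H_sum sigma) -/(P4.B sigma k).
by rewrite (_ : (1 + 1 : R) = 2).
Qed.

Lemma B0 : B 0 = 1.
Proof. by rewrite /P4.B /= /P4.w /= mulr1 sqrtr1. Qed.

Lemma B_bound k (M : R) : 0 <= M ->
  B k <= 2 * expR (- (M / 2)) + (1 - eta M) ^+ k.
Proof.
move=> M0.
have e0 := expR_gt0 (- (M / 2)).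
have q0 : 0 <= 1 - eta M by have := eta_le1 hs M0; lra.
suff : B k - 2 * expR (- (M / 2)) <= (1 - eta M) ^+ k * (1 - 2 * expR (- (M / 2))).
  have := exprn_ge0 k q0; nra.
elim: k => [|k IH]; first by rewrite B0 expr0 mul1r.
have := B_step k M0; rewrite exprSr.
have : (1 - eta M) * (B k - 2 * expR (- (M / 2))) <=
       (1 - eta M) * ((1 - eta M) ^+ k * (1 - 2 * expR (- (M / 2)))).
  exact: ler_wpM2l.
nra.
Qed.


Notation c := (correct_prob sigma).

Lemma pc_eq k : 1 - prob_correct sigma k = 1 / 2 * SL k (fun xs =>
  H true 0 xs * (1 - c true (lrun 0 xs)) + H false 0 xs * (1 - c false (lrun 0 xs))).
Proof.
rewrite /prob_correct big_bool /=.
rewrite (tuple_sum _ (fun xs => H true 0 xs * c true (lrun 0 xs))).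
rewrite (tuple_sum _ (fun xs => H false 0 xs * c false (lrun 0 xs))).
rewrite SL_D.
have E : forall th, SL k (fun xs => H th 0 xs * (1 - c th (lrun 0 xs))) =
    1 - SL k (fun xs => H th 0 xs * c th (lrun 0 xs)).
  move=> th.
  rewrite (@SL_ext _ k _ (fun xs => H th 0 xs + (-1) * (H th 0 xs * c th (lrun 0 xs)))).
    by rewrite SL_D SL_Z H_sum; ring.
  by move=> xs; ring.
rewrite !E; set a := SL k _; set b := SL k _; lra.
Qed.

Lemma Qb xs : 0 <= H true 0 xs * (1 - c true (lrun 0 xs)) +
   H false 0 xs * (1 - c false (lrun 0 xs)) <= w xs.
Proof.
have P0 := @H_pos _ sigma hs true 0 xs; have Q0 := @H_pos _ sigma hs false 0 xs.
have w0 := w_ge0 sigma xs.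
have e1 := err_ge0 sigma true (lrun 0 xs); have e2 := err_ge0 sigma false (lrun 0 xs).
apply/andP; split; first by apply: addr_ge0; apply: mulr_ge0 => //; exact: ltW.
set l := lrun 0 xs.
set P := H true 0 xs in P0 *; set Q := H false 0 xs in Q0 *.
have eE : expR l = P / Q by rewrite /l (lrunE hs) add0r lnK // posrE divr_gt0.
have ww : w xs ^+ 2 = P * Q by rewrite /P4.w sqr_sqrtr // mulr_ge0 // ltW.
have E1 : P = w xs * expR (l / 2).
  apply: sq_inj; [exact: ltW | by rewrite mulr_ge0 // expR_ge0 |].
  rewrite exprMn ww expR_half eE; field; by rewrite gt_eqF.
have E2 : Q = w xs * expR (- (l / 2)).
  apply: sq_inj; [exact: ltW | by rewrite mulr_ge0 // expR_ge0 |].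
  rewrite exprMn ww (_ : - (l / 2) = (- l) / 2); last by field.
  rewrite expR_half expRN eE invf_div; field; by rewrite gt_eqF.
rewrite E1 E2 -!mulrA -mulrDr.
have := err_bound hs l.
move=> h; rewrite -[X in _ <= X]mulr1; exact: ler_wpM2l.
Qed.

Lemma SL_ge0 k (F : seq bool -> R) : (forall xs, 0 <= F xs) -> 0 <= SL k F.
Proof.
elim: k F => [|k IH] F F0 /=; first exact: F0.
by apply: addr_ge0; apply: IH => xs; apply: F0.
Qed.

Lemma pc_bound k : 0 <= 1 - prob_correct sigma k <= B k / 2.
Proof.
rewrite pc_eq; apply/andP; split.
  by rewrite mulr_ge0 //; apply: SL_ge0 => xs; have /andP[] := Qb xs.
rewrite (_ : B k / 2 = 1 / 2 * B k); last by rewrite mulrC mul1r.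
apply: ler_wpM2l => //; apply: SL_le => xs; by have /andP[] := Qb xs.
Qed.

End S8.


End P5.
Import P5.

Theorem theorem9 (R : realType) (sigma : R) (hsigma : 0 < sigma) :
  asymptotic_learning sigma.
Proof.
rewrite /asymptotic_learning.
apply/cvgrPdist_le => eps eps0.
set M : R := 4 / eps.
have M0 : 0 <= M by rewrite /M divr_ge0 // ltW.
set q : R := 1 - eta sigma M.
have et0 : 0 < eta sigma M.
  by rewrite /eta divr_gt0 // exprn_gt0 // divr_gt0 // dlt_gt0.
have et1 := eta_le1 hsigma M0.
have hq : `|q| < 1 by rewrite ger0_norm /q; lra.
have := cvg_expr hq; move/cvgrPdist_le => /(_ (eps / 2)) hcv.
have eps2 : 0 < eps / 2 by rewrite divr_gt0.
have := hcv eps2; apply: filterS => n /= hn.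
rewrite sub0r normrN ger0_norm ?exprn_ge0 // in hn; last by rewrite /q; lra.
have /andP[p0 p1] := pc_bound hsigma n.
have hB := B_bound hsigma n M0.
have he : expR (- (M / 2)) <= eps / 2.
  have h1 : 1 + M / 2 <= expR (M / 2) by exact: expR_ge1Dx.
  have -> : eps / 2 = (2 / eps)^-1 by rewrite invf_div.
  rewrite expRN lef_pV2 ?posrE ?expR_gt0 ?divr_gt0 //.
  apply: le_trans h1; rewrite /M; have -> : 4 / eps / 2 = 2 / eps.
    by field; rewrite gt_eqF.
  lra.
rewrite ger0_norm //.
rewrite -/q in hB; lra.
Qed.
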